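(* There is a quantum communication protocol of cost $O(\log N)$ in the one-clean-qubit model for the $\mathsf{ABCD}$ problem on $N\times N$ matrices such that every \textsc{yes} instance is accepted (output 1) with probability at least $0.95$ and every \textsc{no} instance is accepted with probability at most $0.55$.
   Context: Throughout, $N=2^n$ for a positive integer $n$, and $\mathsf{SU}(N)$ denotes the group of $N\times N$ complex unitary matrices of determinant $1$. The $\mathsf{ABCD}$ problem: Alice is given $A,C\in\mathsf{SU}(N)$ explicitly and Bob is given $B,D\in\mathsf{SU}(N)$ explicitly; they must output $1$ (a \textsc{yes} instance) if $\mathrm{Tr}(ABCD)\ge 0.9N$ and $0$ (a \textsc{no} instance) if $\mathrm{Tr}(ABCD)\le 0.1N$, promised that one of these holds. One-clean-qubit (more generally $k$-clean-qubit) model of communication: the initial joint state consists of $k$ qubits in the state $\lvert 0\rangle$ ($k=1$ here) together with $m$ qubits, unentangled from these, in the maximally mixed state; the players have no other private memory. The players take turns applying unitary operators (depending on their own inputs) to all $m+k$ qubits and sending all of them to the other player. At the end an arbitrary projective measurement independent of the inputs is performed and its outcome is the output. The cost of the protocol is the number of rounds times $(m+k)$. *)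

(* Defs.v *)
From HB Require Import structures.
From mathcomp Require Import all_boot all_order all_algebra.
From mathcomp Require Import reals.
From mathcomp.real_closed Require Import complex.
Set Implicit Arguments. Unset Strict Implicit. Unset Printing Implicit Defensive.
Import Order.TTheory GRing.Theory Num.Theory.
Local Open Scope ring_scope.

Definition adjmx (C : numClosedFieldType) (m : nat) (A : 'M[C]_m) : 'M[C]_m :=
  (map_mx Num.conj A)^T.

Definition unitary (C : numClosedFieldType) (m : nat) (U : 'M[C]_m) : Prop :=
  U *m adjmx U = 1%:M.

Definition SU (C : numClosedFieldType) (m : nat) (U : 'M[C]_m) : Prop :=
  unitary U /\ \det U = 1.

(* orthogonal projector (outcome-1 part of a projective measurement) *)
Definition projector (C : numClosedFieldType) (m : nat) (P : 'M[C]_m) : Prop :=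
  P *m P = P /\ adjmx P = P.

(* A one-clean-qubit communication protocol for inputs that are pairs of
   N x N matrices: [m] maximally mixed qubits + 1 clean qubit, [rounds]
   rounds; in round i (0-indexed) Alice acts if i is even, Bob if i is odd,
   applying the unitary [U i X Y] on all m+1 qubits, where (X,Y) is the
   acting player's input.  [meas] is the projector onto the outcomes
   labelled with output 1 of the final input-independent projective
   measurement. *)
Record ocq_protocol (C : numClosedFieldType) (N : nat) := OCQProtocol {
  ocq_m : nat;
  ocq_rounds : nat;
  ocq_U : 'I_ocq_rounds -> 'M[C]_N -> 'M[C]_N -> 'M[C]_(2 ^ ocq_m.+1);
  ocq_meas : 'M[C]_(2 ^ ocq_m.+1)
}.
Arguments ocq_m {C N}. Arguments ocq_rounds {C N}.
Arguments ocq_U {C N}. Arguments ocq_meas {C N}.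

Definition ocq_dim (C : numClosedFieldType) (N : nat) (P : ocq_protocol C N) :=
  (2 ^ (ocq_m P).+1)%N.

Definition ocq_cost (C : numClosedFieldType) (N : nat) (P : ocq_protocol C N) : nat :=
  (ocq_rounds P * (ocq_m P).+1)%N.

Definition ocq_valid (C : numClosedFieldType) (N : nat) (P : ocq_protocol C N) : Prop :=
  (forall i X Y, SU X -> SU Y -> unitary (ocq_U P i X Y)) /\ projector (ocq_meas P).

(* initial state |0><0| (x) I/2^m : basis index = clean bit * 2^m + rest *)
Definition ocq_init (C : numClosedFieldType) (m : nat) : 'M[C]_(2 ^ m.+1) :=
  \matrix_(i, j) (if (i == j) && (i < 2 ^ m)%N then (2 ^ m)%:R^-1 else 0).

Definition ocq_total (K : numClosedFieldType) (N : nat) (P : ocq_protocol K N)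
  (A B C D : 'M[K]_N) : 'M[K]_(2 ^ (ocq_m P).+1) :=
  foldl (fun W (i : 'I_(ocq_rounds P)) =>
           (if odd i then ocq_U P i B D else ocq_U P i A C) *m W)
        1%:M (enum 'I_(ocq_rounds P)).

Definition ocq_accept (K : numClosedFieldType) (N : nat) (P : ocq_protocol K N)
  (A B C D : 'M[K]_N) : K :=
  let W := ocq_total P A B C D in
  \tr (ocq_meas P *m (W *m ocq_init K (ocq_m P) *m adjmx W)).

(* Main.v *)
Require Import Defs.
From HB Require Import structures.
From mathcomp Require Import all_boot all_order all_algebra.
From mathcomp Require Import reals.
From mathcomp.real_closed Require Import complex.
From mathcomp Require Import ring.
Import Order.TTheory GRing.Theory Num.Theory.
Local Open Scope ring_scope.
Set Implicit Arguments. Unset Strict Implicit.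

Section Gen.
Variable K : numClosedFieldType.

Lemma adjmxM m (A B : 'M[K]_m) : adjmx (A *m B) = adjmx B *m adjmx A.
Proof. by rewrite /adjmx map_mxM trmx_mul. Qed.
Lemma adjmxD m (A B : 'M[K]_m) : adjmx (A + B) = adjmx A + adjmx B.
Proof. by rewrite /adjmx map_mxD linearD. Qed.
Lemma adjmxZ m a (A : 'M[K]_m) : adjmx (a *: A) = a^* *: adjmx A.
Proof. by rewrite /adjmx map_mxZ linearZ. Qed.
Lemma adjmxN m (A : 'M[K]_m) : adjmx (- A) = - adjmx A.
Proof. by rewrite /adjmx map_mxN linearN. Qed.
Lemma adjmx1 m : adjmx (1%:M : 'M[K]_m) = 1%:M.
Proof. by rewrite /adjmx map_scalar_mx rmorph1 tr_scalar_mx. Qed.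
Lemma adjmx0 m : adjmx (0 : 'M[K]_m) = 0.
Proof. by rewrite /adjmx map_mx0 trmx0. Qed.
Lemma adjmx_block k (a b c d : 'M[K]_k) :
  adjmx (block_mx a b c d) = block_mx (adjmx a) (adjmx c) (adjmx b) (adjmx d).
Proof.
by rewrite /adjmx map_block_mx tr_block_mx.
Qed.
Lemma tr_adjmx m (A : 'M[K]_m) : \tr (adjmx A) = (\tr A)^*.
Proof.
rewrite /adjmx mxtrace_tr /mxtrace rmorph_sum; apply: eq_bigr => i _; by rewrite mxE.
Qed.

Lemma cst_mul p q (e : p = q) (A B : 'M[K]_p) :
  castmx (e,e) (A *m B) = castmx (e,e) A *m castmx (e,e) B.
Proof. by case: q / e; rewrite !castmx_id. Qed.
Lemma cst_adj p q (e : p = q) (A : 'M[K]_p) :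
  adjmx (castmx (e,e) A) = castmx (e,e) (adjmx A).
Proof. by case: q / e; rewrite !castmx_id. Qed.
Lemma cst_tr p q (e : p = q) (A : 'M[K]_p) : \tr (castmx (e,e) A) = \tr A.
Proof. by case: q / e; rewrite !castmx_id. Qed.
Lemma cst_1 p q (e : p = q) : castmx (e,e) (1%:M : 'M[K]_p) = 1%:M.
Proof. by case: q / e; rewrite !castmx_id. Qed.
Lemma cst_unitary p q (e : p = q) (A : 'M[K]_p) : unitary A -> unitary (castmx (e,e) A).
Proof. by rewrite /unitary cst_adj -cst_mul => ->; rewrite cst_1. Qed.
Lemma unitaryM m (A B : 'M[K]_m) : unitary A -> unitary B -> unitary (A *m B).
Proof.
rewrite /unitary adjmxM => hA hB.
by rewrite mulmxA -(mulmxA A) hB mulmx1 hA.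
Qed.

Definition ctrl k (X : 'M[K]_k) : 'M[K]_(k + k) := block_mx 1%:M 0 0 X.

Lemma ctrlM k (X Y : 'M[K]_k) : ctrl X *m ctrl Y = ctrl (X *m Y).
Proof.
by rewrite /ctrl mulmx_block !mulmx0 !mul0mx !mulmx1 !addr0 !add0r.
Qed.

Lemma ctrl_unitary k (X : 'M[K]_k) : unitary X -> unitary (ctrl X).
Proof.
rewrite /unitary /ctrl adjmx_block adjmx1 adjmx0 => hX.
by rewrite mulmx_block !mulmx0 !mul0mx !mulmx1 !addr0 !add0r hX -scalar_mx_block.
Qed.

Definition hh : K := sqrtC (2^-1).
Lemma hh_conj : hh^* = hh.
Proof. by apply: geC0_conj; rewrite sqrtC_ge0 invr_ge0 ler0n. Qed.
Lemma hh2 : hh * hh = 2^-1.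
Proof. by rewrite -expr2 sqrtCK. Qed.
Lemma half2 : (2^-1 : K) *+ 2 = 1.
Proof. by rewrite -[LHS]mulr_natr mulVf // pnatr_eq0. Qed.
Lemma half_conj : (2^-1 : K)^* = 2^-1.
Proof. by apply: geC0_conj; rewrite invr_ge0 ler0n. Qed.

Definition Hd k : 'M[K]_(k + k) := hh *: block_mx 1%:M 1%:M 1%:M (-1%:M).
Definition Pm k : 'M[K]_(k + k) := 2^-1 *: block_mx 1%:M 1%:M 1%:M 1%:M.

Lemma Hd_unitary k : unitary (Hd k).
Proof.
rewrite /unitary /Hd adjmxZ adjmx_block adjmxN adjmx1 hh_conj.
rewrite -scalemxAl -scalemxAr scalerA hh2 mulmx_block.
rewrite !mulmx1 !mulmxN !mulNmx !mulmx1 opprK subrr -!mulr2n.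
rewrite scale_block_mx !scaler0 -!scalerMnr !scalerMnl half2 !scale1r.
by rewrite -scalar_mx_block.
Qed.

Lemma Pm_proj k : projector (Pm k).
Proof.
split.
  rewrite /Pm -scalemxAl -scalemxAr scalerA mulmx_block !mulmx1 -!mulr2n.
  have e : (1%:M : 'M[K]_k) *+ 2 = 2%:R *: 1%:M by rewrite scaler_nat.
  by rewrite e -scale_block_mx scalerA mulfVK // pnatr_eq0.
by rewrite /Pm adjmxZ adjmx_block adjmx1 half_conj.
Qed.

Lemma acc k (M : 'M[K]_k) (r : K) : unitary M ->
  \tr (Pm k *m ((ctrl M *m Hd k) *m (r *: block_mx 1%:M 0 0 0) *m adjmx (ctrl M *m Hd k)))
   = 2^-1 * r * (hh * hh) * (k%:R + (\tr M)^* + \tr M + k%:R).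
Proof.
move=> hM.
have EW : ctrl M *m Hd k = hh *: block_mx 1%:M 1%:M M (- M).
  rewrite /ctrl /Hd -scalemxAr mulmx_block.
  by rewrite !mulmx1 !mul0mx !mulmxN !mulmx1 !addr0 !add0r.
rewrite EW adjmxZ adjmx_block adjmxN hh_conj /Pm.
rewrite -!scalemxAl -!scalemxAr !scalerA !mxtraceZ.
rewrite !mulmx_block.
rewrite ?mulmx1 ?mul1mx ?mulmx0 ?mul0mx ?addr0 ?add0r ?mulmx1 ?mul1mx.
rewrite adjmx1 -scalemxAl -scalemxAr mxtraceZ !mulmx_block.
rewrite ?mulmx1 ?mul1mx ?mulmx0 ?mul0mx ?addr0 ?add0r ?mulmx1 ?mul1mx.
rewrite hM mxtrace_block !mxtraceD mxtrace1 tr_adjmx.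
ring.
Qed.

End Gen.

Unset Implicit Arguments. Set Strict Implicit.

Theorem theorem4p1 (R : realType) :
  exists c : nat, forall n : nat, (0 < n)%N ->
    exists P : ocq_protocol R[i] (2 ^ n),
      ocq_valid P /\ (ocq_cost P <= c * n)%N /\
      forall A B C D : 'M[R[i]]_(2 ^ n),
        SU A -> SU B -> SU C -> SU D ->
        ((9%:R / 10%:R) * (2 ^ n)%:R <= \tr (A *m B *m C *m D) ->
           95%:R / 100%:R <= ocq_accept P A B C D) /\
        (\tr (A *m B *m C *m D) <= (1%:R / 10%:R) * (2 ^ n)%:R ->
           ocq_accept P A B C D <= 55%:R / 100%:R).
Proof.
exists 8%N => n n0.
pose N := (2^n)%N.
have e : (N + N = 2 ^ n.+1)%N by rewrite expnS mul2n addnn.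
pose cst := fun X : 'M[R[i]]_(N+N) => castmx (e,e) X.
pose U := fun (i : 'I_4) (X Y : 'M[R[i]]_N) => match nat_of_ord i with
   0 => cst (ctrl Y *m @Hd _ N) | 1 | 2 => cst (ctrl X) | _ => cst (ctrl Y) end.
exists (@OCQProtocol _ _ n 4 U (cst (@Pm _ N))).
split.
  split.
    move=> i X Y sX sY; case: i => [[|[|[|[|?]]]] ?] /=; rewrite /U /=;
    apply: cst_unitary; first [apply: unitaryM; [apply: ctrl_unitary; exact: sY.1|exact: Hd_unitary] | apply: ctrl_unitary; exact: sX.1 | apply: ctrl_unitary; exact: sY.1].
  split; first by rewrite /= -cst_mul (Pm_proj _ _).1.
  by rewrite /= cst_adj (Pm_proj _ _).2.
split.
  by rewrite /ocq_cost /= mulnS (_ : 8 = 4 + 4)%N // mulnDl leq_add2r leq_pmulr.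
move=> A B C D sA sB sC sD.
have tot : ocq_total (@OCQProtocol _ _ n 4 U (cst (@Pm _ N))) A B C D = cst (ctrl (D *m A *m B *m C) *m @Hd _ N).
  rewrite /ocq_total /= !enum_ordSl enum_ord0 /= /U /= mulmx1 /cst -!cst_mul mulmxA !ctrlM.
  by rewrite !mulmxA !ctrlM.
have init : ocq_init R[i] n = cst ((N%:R)^-1 *: block_mx 1%:M 0 0 0).
  apply/matrixP => i j; rewrite /cst castmxE [in RHS]mxE /ocq_init mxE.
  set i' := cast_ord _ i; set j' := cast_ord _ j.
  have -> : (i == j) = (i' == j') by [].
  have -> : (i < 2^n)%N = (i' < N)%N by [].
  case: (split_ordP i') => k ->; case: (split_ordP j') => l ->.
  - by rewrite block_mxEul mxE /= eq_lshift andbT; case: eqVneq => _; rewrite ?mulr1 ?mulr0.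
  - by rewrite block_mxEur mxE /= eq_lrshift mulr0.
  - by rewrite block_mxEdl mxE /= eq_rlshift mulr0.
  - by rewrite block_mxEdr mxE /= andbF mulr0.
have uM : unitary (D *m A *m B *m C).
  apply: unitaryM; [apply: unitaryM; [apply: unitaryM|]|]; [exact: sD.1|exact: sA.1|exact: sB.1|exact: sC.1].
have trE : \tr (D *m A *m B *m C) = \tr (A *m B *m C *m D) by rewrite [RHS]mxtrace_mulC !mulmxA.
have accE : ocq_accept (@OCQProtocol _ _ n 4 U (cst (@Pm _ N))) A B C D
   = 2^-1 * (2^n)%:R^-1 * 2^-1 * ((2^n)%:R + (\tr (A *m B *m C *m D))^* + \tr (A *m B *m C *m D) + (2^n)%:R).
  rewrite /ocq_accept tot init /= /cst cst_adj -!cst_mul cst_tr acc // trE hh2 //.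
rewrite accE.
set t := \tr (A *m B *m C *m D).
have N0 : (2^n)%:R != 0 :> R[i] by rewrite pnatr_eq0 expn_eq0.
have N2 : 0 <= 2%:R * (2^n)%:R :> R[i] by rewrite mulr_ge0 ?ler0n.
split => H.
  have tR : t \is Num.real.
    rewrite -(ler_real H) !rpredM ?rpredV ?realn //.
  rewrite (conj_Creal tR) -subr_ge0.
  have -> : 2^-1 * (2^n)%:R^-1 * 2^-1 * ((2^n)%:R + t + t + (2^n)%:R) - 95%:R / 100%:R
     = (t - 9%:R / 10%:R * (2^n)%:R) / (2%:R * (2^n)%:R) :> R[i].
    by field; rewrite N0.
  by apply: divr_ge0 => //; rewrite subr_ge0.
have tR : t \is Num.real.
  rewrite -(ger_real H) !rpredM ?rpredV ?realn //.
rewrite (conj_Creal tR) -subr_ge0.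
have -> : 55%:R / 100%:R - 2^-1 * (2^n)%:R^-1 * 2^-1 * ((2^n)%:R + t + t + (2^n)%:R)
   = (1%:R / 10%:R * (2^n)%:R - t) / (2%:R * (2^n)%:R) :> R[i].
  by field; rewrite N0.
by apply: divr_ge0 => //; rewrite subr_ge0.
Qed.
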